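(* Let $G=(V,E)$ be a finite planar embedded graph, $\mathbf{p}$ a packing of $G$, and $V=V^+\sqcup V^-\sqcup V^=\sqcup V^0$ a partition. Then $\mathbf{p}$ is second order rigid if and only if every nontrivial proper infinitesimal flex $\mathbf{p}'$ is blocked by some equilibrium stress $\omega$.
   Context: A packing of $G=(V,E)$, $V=\{1,\dots,n\}$, is $\mathbf{p}=(x_1,y_1,r_1,\dots,x_n,y_n,r_n)\in\mathbb{R}^{3n}$, all $r_i>0$, with $(r_i+r_j)^2=(x_i-x_j)^2+(y_i-y_j)^2$ for all $(i,j)\in E$ and the neighbors of each vertex in the same counterclockwise order as in the embedding; $\mathbf{p}_i=(x_i,y_i)$. Partition: $V^+$ (radius may increase or stay), $V^-$ (may decrease or stay), $V^=$ (fixed), $V^0$ (free). An infinitesimal flex is $\mathbf{p}'$ with $(\mathbf{p}_i-\mathbf{p}_j)\cdot(\mathbf{p}_i'-\mathbf{p}_j')=(r_i+r_j)(r_i'+r_j')$ for all edges; proper if $r_i'\ge 0$ on $V^+$, $\le0$ on $V^-$, $=0$ on $V^=$; trivial if it is the derivative of a family of rigid motions (rotations/translations of centers, radii unchanged). For proper $\mathbf{p}'$, the modified partition is $\tilde V^+=\{i\in V^+:r_i'=0\}$, $\tilde V^-=\{i\in V^-:r_i'=0\}$, $\tilde V^==V^=$, $\tilde V^0$ the rest. $\mathbf{p}'$ is extendable if there is $\mathbf{p}''\in\mathbb{R}^{3n}$ with $(\mathbf{p}_i-\mathbf{p}_j)\cdot(\mathbf{p}_i''-\mathbf{p}_j'')-(r_i+r_j)(r_i''+r_j'')=(r_i'+r_j')^2-(\mathbf{p}_i'-\mathbf{p}_j')\cdot(\mathbf{p}_i'-\mathbf{p}_j')$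 for all $(i,j)\in E$, and $r_i''\ge0$ on $\tilde V^+$, $\le 0$ on $\tilde V^-$, $=0$ on $\tilde V^=$. $\mathbf{p}$ is second order rigid if no nontrivial proper infinitesimal flex is extendable. A stress $\omega:E\to\mathbb{R}$ is an equilibrium stress if $\sum_{j:(i,j)\in E}\omega_{ij}(\mathbf{p}_i-\mathbf{p}_j)=0$ for all $i$; its radial force sum is $\omega_i=\sum_{j:(i,j)\in E}\omega_{ij}(r_i+r_j)$. An equilibrium stress $\omega$ blocks $\mathbf{p}'$ if $\omega_i\ge 0$ for $i\in\tilde V^-$, $\omega_i\le0$ for $i\in\tilde V^+$, $\omega_i=0$ for $i\in\tilde V^0$, and $\sum_{(i,j)\in E}\omega_{ij}[(\mathbf{p}_i'-\mathbf{p}_j')\cdot(\mathbf{p}_i'-\mathbf{p}_j')-(r_i'+r_j')^2]>0$. *)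

(* Defs.v *)
From mathcomp Require Import all_boot all_order all_algebra.
From mathcomp Require Import reals.
Set Implicit Arguments. Unset Strict Implicit. Unset Printing Implicit Defensive.
Import Order.TTheory GRing.Theory Num.Theory.
Local Open Scope ring_scope.

(* The four blocks of the partition V = V^+ ⊔ V^- ⊔ V^= ⊔ V^0. *)
Inductive kind := KPlus | KMinus | KEq | KFree.

Section Packings.
Variables (R : realType) (n : nat).
Implicit Types (adj : rel 'I_n) (x y r : 'I_n -> R).

Definition cross (a b : R * R) : R := a.1 * b.2 - a.2 * b.1.
Definition dot (a b : R * R) : R := a.1 * b.1 + a.2 * b.2.
Definition vsub (a b : R * R) : R * R := (a.1 - b.1, a.2 - b.2).

(* the ccw angle from a to w lies in [0, pi) *)
Definition upper_half (a w : R * R) : bool :=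
  (0 < cross a w) || ((cross a w == 0) && (0 < dot a w)).
(* ccw angle from a to w is strictly smaller than ccw angle from a to b
   (angles measured in [0, 2 pi)) *)
Definition ang_lt (a w b : R * R) : bool :=
  if upper_half a w == upper_half a b then 0 < cross w b else upper_half a w.
Definition ang_pos (a w : R * R) : bool :=
  ~~ ((cross a w == 0) && (0 < dot a w)).
Definition in_ccw_sector (a b w : R * R) : bool := ang_pos a w && ang_lt a w b.

Definition ccw_order (c : R * R) (s : seq (R * R)) : Prop :=
  forall k m : nat, (k < size s)%N -> (m < size s)%N ->
    m != k -> m != (k.+1 %% size s)%N ->
    ~~ in_ccw_sector (vsub (nth c s k) c) (vsub (nth c s (k.+1 %% size s)) c)
                     (vsub (nth c s m) c).

(* The embedding is given by a rotation system: rot i lists the neighbours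
   of i, each once, in their counterclockwise cyclic order. *)
Definition rotation_system adj (rot : 'I_n -> seq 'I_n) : Prop :=
  forall i, uniq (rot i) /\ (forall j, (j \in rot i) = adj i j).

Definition center x y (i : 'I_n) : R * R := (x i, y i).

Definition is_packing adj (rot : 'I_n -> seq 'I_n) x y r : Prop :=
  [/\ forall i, 0 < r i,
      forall i j, adj i j ->
        (r i + r j) ^+ 2 = (x i - x j) ^+ 2 + (y i - y j) ^+ 2
    & forall i, ccw_order (center x y i) [seq center x y j | j <- rot i]].

Definition inf_flex adj x y r (x' y' r' : 'I_n -> R) : Prop :=
  forall i j, adj i j ->
    (x i - x j) * (x' i - x' j) + (y i - y j) * (y' i - y' j)
    = (r i + r j) * (r' i + r' j).

Definition sign_ok (k : kind) (v : R) : Prop :=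
  match k return Prop with
  | KPlus => 0 <= v
  | KMinus => v <= 0
  | KEq => v = 0
  | KFree => True
  end.

Definition proper_flex adj x y r (part : 'I_n -> kind) (x' y' r' : 'I_n -> R) :=
  inf_flex adj x y r x' y' r' /\ forall i, sign_ok (part i) (r' i).

(* derivative at t = 0 of a family of rigid motions (rotation by angle
   a t about the origin followed by translation (b t, c t), identity at 0):
   p_i' = a'(0) * J p_i + (b'(0), c'(0)), radii unchanged. *)
Definition trivial_flex x y (x' y' r' : 'I_n -> R) : Prop :=
  exists a b c : R, forall i,
    [/\ x' i = - a * y i + b, y' i = a * x i + c & r' i = 0].

Definition tkind (part : 'I_n -> kind) (r' : 'I_n -> R) (i : 'I_n) : kind :=
  match part i with
  | KPlus => if r' i == 0 then KPlus else KFree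
  | KMinus => if r' i == 0 then KMinus else KFree
  | k => k
  end.

Definition extendable adj x y r (part : 'I_n -> kind) (x' y' r' : 'I_n -> R) :=
  exists x'' y'' r'' : 'I_n -> R,
    (forall i j, adj i j ->
      (x i - x j) * (x'' i - x'' j) + (y i - y j) * (y'' i - y'' j)
        - (r i + r j) * (r'' i + r'' j)
      = (r' i + r' j) ^+ 2 - ((x' i - x' j) ^+ 2 + (y' i - y' j) ^+ 2))
    /\ forall i, sign_ok (tkind part r' i) (r'' i).

Definition second_order_rigid adj x y r (part : 'I_n -> kind) : Prop :=
  forall x' y' r', proper_flex adj x y r part x' y' r' ->
    ~ trivial_flex x y x' y' r' -> ~ extendable adj x y r part x' y' r'.

(* a stress is a function on (unordered) edges: w i j = w j i, only values
   on edges matter *)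
Definition stress_sym (w : 'I_n -> 'I_n -> R) : Prop := forall i j, w i j = w j i.

Definition equilibrium adj x y (w : 'I_n -> 'I_n -> R) : Prop :=
  forall i, \sum_(j | adj i j) w i j * (x i - x j) = 0
         /\ \sum_(j | adj i j) w i j * (y i - y j) = 0.

Definition radial_sum adj r (w : 'I_n -> 'I_n -> R) (i : 'I_n) : R :=
  \sum_(j | adj i j) w i j * (r i + r j).

(* sum over each (unordered) edge {i,j} once, as (i,j) with i < j *)
Definition blocks adj x y r (part : 'I_n -> kind) (x' y' r' : 'I_n -> R)
    (w : 'I_n -> 'I_n -> R) : Prop :=
  (forall i, match tkind part r' i return Prop with
             | KMinus => 0 <= radial_sum adj r w i
             | KPlus => radial_sum adj r w i <= 0
             | KFree => radial_sum adj r w i = 0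
             | KEq => True
             end)
  /\ 0 < \sum_(i < n) \sum_(j < n | (i < j)%N && adj i j)
           w i j * (((x' i - x' j) ^+ 2 + (y' i - y' j) ^+ 2)
                    - (r' i + r' j) ^+ 2).

End Packings.

(* Main.v *)
Require Import Defs.
From mathcomp Require Import all_boot all_order all_algebra.
From mathcomp Require Import reals.
From mathcomp Require Import ring lra.
Set Implicit Arguments. Unset Strict Implicit. Unset Printing Implicit Defensive.
Import Order.TTheory GRing.Theory Num.Theory.
Local Open Scope ring_scope.

Section FM.
Variable R : realFieldType.

Lemma sum_delta (I : finType) (k0 : I) (f : I -> R) :
  \sum_k (k == k0)%:R * f k = f k0.
Proof.
rewrite (bigD1 k0) //= eqxx mul1r big1 ?addr0 // => k /negbTE ->.
by rewrite mul0r.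
Qed.

Lemma ex_max_seq (T : eqType) (s : seq T) (f : T -> R) : s != [::] ->
  exists2 i, i \in s & forall j, j \in s -> f j <= f i.
Proof.
elim: s => [//|a s IH] _.
case: (eqVneq s [::]) => [->|sn0].
  by exists a; rewrite ?mem_seq1 // => j; rewrite mem_seq1 => /eqP ->.
have [i iin imax] := IH sn0.
case: (lerP (f a) (f i)) => hai.
  exists i; first by rewrite in_cons iin orbT.
  by move=> j; rewrite in_cons => /orP [/eqP ->|/imax].
exists a; first by rewrite in_cons eqxx.
move=> j; rewrite in_cons => /orP [/eqP ->//|/imax h].
exact: le_trans h (ltW hai).
Qed.

Lemma ex_max (I : finType) (P : pred I) (f : I -> R) : (exists i, P i) ->
  exists2 i, P i & forall j, P j -> f j <= f i.
Proof.
move=> [i0 Pi0].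
have : [seq i <- enum I | P i] != [::].
  apply/eqP => h; have : i0 \in [seq i <- enum I | P i] by rewrite mem_filter Pi0 mem_enum.
  by rewrite h.
move=> /(ex_max_seq f) [i]; rewrite mem_filter => /andP [Pi _] h.
exists i => // j Pj; apply: h; by rewrite mem_filter Pj mem_enum.
Qed.

Lemma bounds_neg (I : finType) (c s : I -> R) :
  (exists q, c q < 0) ->
  (forall k, c k = 0 -> 0 <= s k) ->
  (forall p q, 0 < c p -> c q < 0 -> 0 <= c p * s q - c q * s p) ->
  exists t, forall k, c k * t <= s k.
Proof.
move=> hq hZ hPN.
have [q0 hq0 qmax] := ex_max (fun q => s q / c q) hq.
exists (s q0 / c q0) => k.
set t := s q0 / c q0.
have eq0 : s q0 = t * c q0 by rewrite /t mulfVK // lt_eqF.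
case: (ltgtP (c k) 0) => hk.
- have hu : s k / c k <= t := qmax k hk.
  move: hu; set u := s k / c k => hu.
  have euk : s k = u * c k by rewrite /u mulfVK // lt_eqF.
  rewrite euk; nra.
- have := hPN k q0 hk hq0; rewrite eq0 => h; nra.
- by rewrite hk mul0r; apply: hZ.
Qed.

Lemma bounds (I : finType) (c s : I -> R) :
  (forall k, c k = 0 -> 0 <= s k) ->
  (forall p q, 0 < c p -> c q < 0 -> 0 <= c p * s q - c q * s p) ->
  exists t, forall k, c k * t <= s k.
Proof.
move=> hZ hPN.
case: (boolP [exists q, c q < 0]) => [/existsP hq|hnq].
  exact: bounds_neg.
case: (boolP [exists p, 0 < c p]) => [/existsP [p hp]|hnp].
  have [|||t ht] := @bounds_neg I (fun k => - c k) s.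
  - by exists p; rewrite oppr_lt0.
  - by move=> k /eqP; rewrite oppr_eq0 => /eqP; apply: hZ.
  - move=> p' q; rewrite oppr_gt0 oppr_lt0 => h1 h2.
    have hnp' : forall k, 0 <= c k by move=> k; move/existsPn: hnq => /(_ k); rewrite -leNgt.
    by move: (lt_le_trans h1 (hnp' p')); rewrite ltxx.
  by exists (- t) => k; move: (ht k); rewrite mulrN mulNr.
exists 0 => k; rewrite mulr0; apply: hZ.
move/existsPn: hnq => /(_ k); move/existsPn: hnp => /(_ k).
rewrite -!leNgt => h1 h2; apply/eqP; rewrite eq_le h1 h2 //.
Qed.
End FM.

Section FM2.
Variable R : realFieldType.
Variable J : finType.

Definition mu (I : finType) (c : I -> R) (j : I + (I * I)) (k : I) : R :=
  match j with
  | inl k0 => if c k0 == 0 then (k == k0)%:R else 0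
  | inr pq => if (0 < c pq.1) && (c pq.2 < 0)
              then c pq.1 * (k == pq.2)%:R - c pq.2 * (k == pq.1)%:R else 0
  end.

Definition muf (I : finType) (c : I -> R) (j : I + (I * I)) (f : I -> R) : R :=
  match j with
  | inl k0 => if c k0 == 0 then f k0 else 0
  | inr pq => if (0 < c pq.1) && (c pq.2 < 0)
              then c pq.1 * f pq.2 - c pq.2 * f pq.1 else 0
  end.

Lemma mu_sum (I : finType) (c : I -> R) j (f : I -> R) :
  \sum_k mu c j k * f k = muf c j f.
Proof.
case: j => [k0|[p q]] /=; case: ifP => _.
- by apply: sum_delta.
- by rewrite big1 // => k _; rewrite mul0r.
- under eq_bigr do rewrite mulrBl -!mulrA.
  by rewrite sumrB -!mulr_sumr !sum_delta.
- by rewrite big1 // => k _; rewrite mul0r.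
Qed.

Lemma mu_ge0 (I : finType) (c : I -> R) j k : 0 <= mu c j k.
Proof.
case: j => [k0|[p q]] /=; case: ifP => //; idtac.
move=> /andP [h1 h2].
rewrite subr_ge0; apply: (@le_trans _ _ 0).
  by rewrite mulr_le0_ge0 // ?ltW // ler0n.
by rewrite mulr_ge0 // ?ltW // ler0n.
Qed.

Lemma sum_comb (I I' : finType) (l' : I' -> R) (m : I' -> I -> R) (f : I -> R) :
  \sum_k (\sum_j l' j * m j k) * f k = \sum_j l' j * \sum_k m j k * f k.
Proof.
under eq_bigr do rewrite mulr_suml.
rewrite exchange_big; apply: eq_bigr => j _; rewrite mulr_sumr.
by apply: eq_bigr => k _; rewrite mulrA.
Qed.

Lemma fm_main : forall m (I : finType) (A : I -> J -> R) (b : I -> R) (S : {set J}),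
  (#|S| <= m)%N -> (forall k j, j \notin S -> A k j = 0) ->
  (forall x : J -> R, exists k, b k < \sum_j A k j * x j) ->
  exists l : I -> R, [/\ forall k, 0 <= l k, forall j, \sum_k l k * A k j = 0 &
                        \sum_k l k * b k < 0].
Proof.
elim=> [|m IH] I A b S hS hA hinf.
  have S0 : S = set0 by apply/eqP; rewrite -cards_eq0 -leqn0.
  have [k hk] := hinf (fun _ => 0).
  have : \sum_j A k j * 0 = 0 by rewrite big1 // => j _; rewrite mulr0.
  move=> e; rewrite e in hk.
  exists (fun k' => (k' == k)%:R); split.
  - by move=> k'; rewrite ler0n.
  - by move=> j; rewrite sum_delta hA // S0 inE.
  - by rewrite sum_delta.
case: (leqP #|S| m) => hSm; first exact: IH hSm hA hinf.
have : (0 < #|S|)%N by apply: leq_ltn_trans hSm.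
rewrite card_gt0 => /set0Pn [j0 j0S].
pose c k := A k j0.
pose A' j i := \sum_k mu c j k * A k i.
pose b' j := \sum_k mu c j k * b k.
have hmuc j : muf c j c = 0.
  case: j => [k0|[p q]] /=; case: ifP => //; first by move/eqP.
  by move=> _; rewrite /c mulrC subrr.
have hA'j0 j : A' j j0 = 0 by rewrite /A' mu_sum hmuc.
have hS' : (#|S :\ j0| <= m)%N.
  by move: hS; rewrite (cardsD1 j0 S) j0S add1n ltnS.
have hA' : forall k j, j \notin S :\ j0 -> A' k j = 0.
  move=> k j; rewrite !inE negb_and negbK => /orP [/eqP ->|hj]; first exact: hA'j0.
  by rewrite /A' big1 // => k' _; rewrite hA // mulr0.
have hinf' : forall x : J -> R, exists k, b' k < \sum_j A' k j * x j.
  move=> x'.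
  case: (boolP [forall k, \sum_j A' k j * x' j <= b' k]); last first.
    by move/forallPn => [k]; rewrite -ltNge => h; exists k.
  move/forallP => H.
  pose x0 i := if i == j0 then 0 else x' i.
  pose e k := \sum_i A k i * x0 i.
  have he k : \sum_i A k i * x' i = e k + c k * x' j0.
    rewrite /e (bigD1 j0) //= [in RHS](bigD1 j0) //= /x0 eqxx mulr0 add0r addrC.
    congr (_ + _); apply: eq_bigr => i /negbTE ->; done.
  have hH j : muf c j e <= muf c j b.
    move: (H j); rewrite /b' mu_sum.
    have -> : \sum_j0 A' j j0 * x' j0 = muf c j e.
      rewrite /A'; under eq_bigr do rewrite mulr_suml.
      rewrite exchange_big /=.
      have hk k : \sum_i mu c j k * A k i * x' i = mu c j k * (e k + c k * x' j0).
        by rewrite -he mulr_sumr; apply: eq_bigr => i _; rewrite mulrA.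
      rewrite (eq_bigr _ (fun k _ => hk k)).
      under eq_bigr do rewrite mulrDr.
      rewrite big_split /= mu_sum.
      under eq_bigr do rewrite mulrA mulrC.
      by rewrite -mulr_sumr mu_sum hmuc mulr0 addr0.
    done.
  have hZ : forall k, c k = 0 -> 0 <= b k - e k.
    move=> k hk; move: (hH (inl k)) => /=; rewrite hk eqxx subr_ge0 //.
  have hPN : forall p q, 0 < c p -> c q < 0 -> 0 <= c p * (b q - e q) - c q * (b p - e p).
    move=> p q hp hq; move: (hH (inr (p, q))) => /=; rewrite hp hq /= => h.
    rewrite !mulrBr; lra.
  have [t ht] := @bounds R I c (fun k => b k - e k) hZ hPN.
  pose x i := if i == j0 then t else x' i.
  have [k hk] := hinf x.
  move: (ht k); rewrite lerBrDl => hk2.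
  have : \sum_j A k j * x j = e k + c k * t.
    rewrite /e (bigD1 j0) //= [in RHS](bigD1 j0) //= /x /x0 eqxx mulr0 add0r addrC.
    congr (_ + _); apply: eq_bigr => i /negbTE ->; done.
  move=> hx; rewrite hx in hk.
  by move: (lt_le_trans hk hk2); rewrite ltxx.
have [l' [hl'0 hl'A hl'b]] := IH _ A' b' _ hS' hA' hinf'.
exists (fun k => \sum_j l' j * mu c j k); split.
- by move=> k; apply: sumr_ge0 => j _; rewrite mulr_ge0 ?mu_ge0.
- by move=> i; rewrite sum_comb; exact: hl'A.
- by rewrite sum_comb; exact: hl'b.
Qed.
End FM2.

Section FM3.
Variable R : realType.

Definition dual_ok (k : kind) (v : R) : Prop :=
  match k with KPlus => 0 <= v | KMinus => v <= 0 | KEq => True | KFree => v = 0 end.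

Definition allowP (k : kind) : bool := match k with KPlus | KEq => true | _ => false end.
Definition allowM (k : kind) : bool := match k with KMinus | KEq => true | _ => false end.

Lemma sum_delta' (I : finType) (k0 : I) (f : I -> R) :
  \sum_k f k * (k == k0)%:R = f k0.
Proof. by rewrite -(sum_delta k0 f); apply: eq_bigr => k _; rewrite mulrC. Qed.

Lemma farkas_eq (I J : finType) (A : I -> J -> R) (b : I -> R) (s : J -> kind) :
  ~ (exists x : J -> R, (forall e, \sum_j A e j * x j = b e) /\ forall j, sign_ok (s j) (x j)) <->
  exists w : I -> R, (forall j, dual_ok (s j) (\sum_e w e * A e j)) /\ \sum_e w e * b e < 0.
Proof.
split; last first.
  move=> [w [hw hb]] [x [hx hs]].
  have : \sum_e w e * b e = \sum_j x j * \sum_e w e * A e j.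
    rewrite (eq_bigr (fun e => \sum_j w e * (A e j * x j))); last first.
      by move=> e _; rewrite -hx mulr_sumr.
    rewrite exchange_big; apply: eq_bigr => j _; rewrite mulr_sumr.
    by apply: eq_bigr => e _; rewrite mulrA mulrC.
  move=> he; have : 0 <= \sum_e w e * b e.
    rewrite he; apply: sumr_ge0 => j _; move: (hw j) (hs j).
    case: (s j) => /=.
    - by move=> h1 h2; apply: mulr_ge0.
    - by move=> h1 h2; apply: mulr_le0.
    - by move=> _ ->; rewrite mul0r.
    - by move=> -> _; rewrite mulr0.
  by rewrite leNgt hb.
move=> hnf.
pose A2 (k : (I + I) + (J + J)) (j : J) : R :=
  match k with
  | inl (inl e) => A e j
  | inl (inr e) => - A e j
  | inr (inl j0) => - ((allowP (s j0))%:R * (j0 == j)%:R)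
  | inr (inr j0) => (allowM (s j0))%:R * (j0 == j)%:R
  end.
pose b2 (k : (I + I) + (J + J)) : R :=
  match k with
  | inl (inl e) => b e
  | inl (inr e) => - b e
  | _ => 0
  end.
have hinf : forall x : J -> R, exists k, b2 k < \sum_j A2 k j * x j.
  move=> x; case: (boolP [forall k, \sum_j A2 k j * x j <= b2 k]); last first.
    by move/forallPn => [k]; rewrite -ltNge => h; exists k.
  move/forallP => H; exfalso; apply: hnf; exists x; split.
  - move=> e; apply/eqP; rewrite eq_le (H (inl (inl e))) /=.
    by move: (H (inl (inr e))) => /=; under eq_bigr do rewrite mulNr; rewrite sumrN lerN2.
  - move=> j; move: (H (inr (inl j))) (H (inr (inr j))) => /=.
    under eq_bigr do rewrite mulNr -mulrA eq_sym; rewrite sumrN -mulr_sumr sum_delta.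
    under eq_bigr do rewrite -mulrA eq_sym; rewrite -mulr_sumr sum_delta.
    case: (s j) => /=; rewrite ?mul1r ?mul0r ?oppr_le0 //.
    by move=> h1 h2; apply/eqP; rewrite eq_le h1 h2.
have hT : forall k j, j \notin [set: J] -> A2 k j = 0 by move=> k j; rewrite inE.
have [l [hl0 hlA hlb]] := @fm_main R J #|[set: J]| _ A2 b2 setT (leqnn _)
  hT hinf.
exists (fun e => l (inl (inl e)) - l (inl (inr e))); split; last first.
  move: hlb; rewrite !big_sumType /=.
  have z1 : \sum_j l (inr (inl j)) * (0:R) = 0 by rewrite big1 // => j _; rewrite mulr0.
  have z2 : \sum_j l (inr (inr j)) * (0:R) = 0 by rewrite big1 // => j _; rewrite mulr0.
  rewrite z1 z2 !addr0.
  under [X in _ + X < _ -> _]eq_bigr do rewrite mulrN.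
  by rewrite sumrN -sumrB; under eq_bigr do rewrite mulrBl.
move=> j; move: (hlA j); rewrite !big_sumType /=.
have hC : \sum_i l (inr (inl i)) * - ((allowP (s i))%:R * (i == j)%:R)
   = - (l (inr (inl j)) * (allowP (s j))%:R).
  under eq_bigr do rewrite mulrN mulrA; by rewrite sumrN sum_delta'.
have hD : \sum_i l (inr (inr i)) * ((allowM (s i))%:R * (i == j)%:R)
   = l (inr (inr j)) * (allowM (s j))%:R.
  under eq_bigr do rewrite mulrA; by rewrite sum_delta'.
have hAB : \sum_i l (inl (inl i)) * A i j + \sum_i l (inl (inr i)) * - A i j
   = \sum_e (l (inl (inl e)) - l (inl (inr e))) * A e j.
  rewrite -big_split /=; apply: eq_bigr => e _; rewrite mulrBl mulrN //.
rewrite hC hD hAB.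
have hl1 := hl0 (inr (inl j)); have hl2 := hl0 (inr (inr j)).
move: (\sum__ _) => S.
case: (s j) => /=; rewrite ?mulr1 ?mulr0 ?oppr0 ?addr0 ?add0r => h.
- by rewrite -(subrK (l (inr (inl j))) S) h add0r.
- by rewrite -(addrK (l (inr (inr j))) S) h sub0r oppr_le0.
- done.
- done.
Qed.
End FM3.

Section Main.
Variables (R : realType) (n : nat) (adj : rel 'I_n).
Hypothesis hsym : symmetric adj.
Hypothesis hirr : irreflexive adj.

Definition cnd (i j : 'I_n) : bool := (i < j)%N && adj i j.

Lemma sum_if_split (I : finType) (P : pred I) (F G : I -> R) :
  \sum_i (if P i then F i + G i else 0) =
  \sum_i (if P i then F i else 0) + \sum_i (if P i then G i else 0).
Proof. by rewrite -big_split; apply: eq_bigr => i _ /=; case: (P i); rewrite ?addr0. Qed.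

Lemma edge_sum k (G : 'I_n -> 'I_n -> R) :
  \sum_i \sum_j (if cnd i j then (k == i)%:R * G i j + (k == j)%:R * G j i else 0)
  = \sum_j (if adj k j then G k j else 0).
Proof.
under eq_bigr do rewrite sum_if_split.
rewrite big_split /=.
have -> : \sum_i \sum_j (if cnd i j then (k == i)%:R * G i j else 0)
    = \sum_j (if cnd k j then G k j else 0).
  rewrite -(sum_delta k (fun i => \sum_j (if cnd i j then G i j else 0))).
  apply: eq_bigr => i _; rewrite mulr_sumr eq_sym; apply: eq_bigr => j _.
  by case: (cnd i j); rewrite ?mulr0.
have -> : \sum_i \sum_j (if cnd i j then (k == j)%:R * G j i else 0)
    = \sum_i (if cnd i k then G k i else 0).
  rewrite exchange_big /=.
  rewrite -(sum_delta k (fun j => \sum_i (if cnd i j then G j i else 0))).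
  apply: eq_bigr => j _; rewrite mulr_sumr eq_sym; apply: eq_bigr => i _.
  by case: (cnd i j); rewrite ?mulr0.
rewrite -big_split /=; apply: eq_bigr => j _.
rewrite /cnd (hsym j k).
case: (ltngtP k j) => h /=.
- by rewrite addr0; case: (adj k j).
- by rewrite add0r; case: (adj k j).
- by move: h => /val_inj h; rewrite -h hirr addr0.
Qed.

Lemma pair_if (F : 'I_n * 'I_n -> R) :
  \sum_(e : 'I_n * 'I_n) F e = \sum_i \sum_j F (i, j).
Proof. by rewrite pair_big; apply: eq_bigr => -[]. Qed.

Lemma sum_d (c : R) (i j : 'I_n) (f : 'I_n -> R) :
  \sum_k (c * ((k == i)%:R - (k == j)%:R)) * f k = c * (f i - f j).
Proof.
under eq_bigr do rewrite -mulrA mulrBl.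
by rewrite -mulr_sumr sumrB !sum_delta.
Qed.

Lemma sum_s (c : R) (i j : 'I_n) (f : 'I_n -> R) :
  \sum_k (- (c * ((k == i)%:R + (k == j)%:R))) * f k = - (c * (f i + f j)).
Proof.
under eq_bigr do rewrite mulNr -mulrA mulrDl.
by rewrite sumrN -mulr_sumr big_split /= !sum_delta.
Qed.

Variables (x y r x' y' r' : 'I_n -> R) (part : 'I_n -> kind).

Definition Amat (e : 'I_n * 'I_n) (v : ('I_n + 'I_n) + 'I_n) : R :=
  if cnd e.1 e.2 then
    match v with
    | inl (inl k) => (x e.1 - x e.2) * ((k == e.1)%:R - (k == e.2)%:R)
    | inl (inr k) => (y e.1 - y e.2) * ((k == e.1)%:R - (k == e.2)%:R)
    | inr k => - ((r e.1 + r e.2) * ((k == e.1)%:R + (k == e.2)%:R))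
    end
  else 0.

Definition bvec (e : 'I_n * 'I_n) : R :=
  if cnd e.1 e.2 then (r' e.1 + r' e.2) ^+ 2 - ((x' e.1 - x' e.2) ^+ 2 + (y' e.1 - y' e.2) ^+ 2)
  else 0.

Definition skind (v : ('I_n + 'I_n) + 'I_n) : kind :=
  match v with inl _ => KFree | inr k => tkind part r' k end.

Lemma rowsum e (X : ('I_n + 'I_n) + 'I_n -> R) :
  \sum_v Amat e v * X v =
  if cnd e.1 e.2 then
    (x e.1 - x e.2) * (X (inl (inl e.1)) - X (inl (inl e.2))) +
    (y e.1 - y e.2) * (X (inl (inr e.1)) - X (inl (inr e.2))) -
    (r e.1 + r e.2) * (X (inr e.1) + X (inr e.2))
  else 0.
Proof.
rewrite !big_sumType /= /Amat; case: (cnd e.1 e.2).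
  by rewrite !sum_d sum_s.
by rewrite !big1 ?addr0 // => k _; rewrite mul0r.
Qed.

Lemma colgen (W : 'I_n -> 'I_n -> R) (hW : stress_sym W) (z : 'I_n -> R) k :
  \sum_(e : 'I_n * 'I_n) W e.1 e.2 *
     (if cnd e.1 e.2 then (z e.1 - z e.2) * ((k == e.1)%:R - (k == e.2)%:R) else 0)
  = \sum_(j | adj k j) W k j * (z k - z j).
Proof.
rewrite pair_if [RHS]big_mkcond /=.
apply: (etrans _ (edge_sum k (fun a b => W a b * (z a - z b)))) => /=; apply: eq_bigr => i _; apply: eq_bigr => j _.
case: (cnd i j); last by rewrite mulr0.
rewrite (hW j i); ring.
Qed.

Lemma colr (W : 'I_n -> 'I_n -> R) (hW : stress_sym W) k :
  \sum_(e : 'I_n * 'I_n) W e.1 e.2 * Amat e (inr k) = - radial_sum adj r W k.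
Proof.
rewrite /radial_sum [in RHS]big_mkcond /=.
have E := edge_sum k (fun a b => W a b * (r a + r b)); simpl in E.
rewrite -E -sumrN pair_if /=.
apply: eq_bigr => i _; rewrite -sumrN; apply: eq_bigr => j _.
rewrite /Amat /=; case: (cnd i j); last by rewrite mulr0 oppr0.
rewrite (hW j i); ring.
Qed.

Lemma bsum (W : 'I_n -> 'I_n -> R) :
  \sum_(e : 'I_n * 'I_n) W e.1 e.2 * bvec e =
  - \sum_(i < n) \sum_(j < n | (i < j)%N && adj i j)
           W i j * (((x' i - x' j) ^+ 2 + (y' i - y' j) ^+ 2) - (r' i + r' j) ^+ 2).
Proof.
rewrite pair_if /= -sumrN; apply: eq_bigr => i _; rewrite -sumrN [RHS]big_mkcond /=.
apply: eq_bigr => j _; rewrite /bvec /= -/(cnd i j); case: (cnd i j).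
  by ring.
by rewrite mulr0.
Qed.

Lemma ext_iff : extendable adj x y r part x' y' r' <->
  exists X, (forall e, \sum_v Amat e v * X v = bvec e) /\ forall v, sign_ok (skind v) (X v).
Proof.
split.
  move=> [x'' [y'' [r'' [heq hs]]]].
  exists (fun v => match v with inl (inl k) => x'' k | inl (inr k) => y'' k | inr k => r'' k end).
  split.
    move=> e; rewrite rowsum /bvec; case h: (cnd e.1 e.2) => //.
    by apply: heq; move/andP: h => [].
  by case=> [[k|k]|k] //=; apply: hs.
move=> [X [hX hs]].
exists (fun k => X (inl (inl k))), (fun k => X (inl (inr k))), (fun k => X (inr k)).
split; last by move=> k; exact: (hs (inr k)).
move=> i j hij.
case: (ltngtP i j) => h.
- by have := hX (i, j); rewrite rowsum /bvec /cnd /= hij h.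
- have := hX (j, i); rewrite rowsum /bvec /cnd /= (hsym j i) hij h /= => e.
  lra.
- by move: h hij => /val_inj ->; rewrite hirr.
Qed.

Lemma cert_iff :
  (exists W, [/\ stress_sym W, equilibrium adj x y W & blocks adj x y r part x' y' r' W]) <->
  exists w : 'I_n * 'I_n -> R,
    (forall v, dual_ok (skind v) (\sum_e w e * Amat e v)) /\ \sum_e w e * bvec e < 0.
Proof.
split.
  move=> [W [hW heq [hrad hbl]]].
  exists (fun e => W e.1 e.2); split.
    case=> [[k|k]|k] /=.
    - by rewrite /Amat /= (colgen hW x k); case: (heq k).
    - by rewrite /Amat /= (colgen hW y k); case: (heq k).
    - rewrite colr //; move: (hrad k); case: (tkind part r' k) => /=.
      + by rewrite oppr_ge0.
      + by rewrite oppr_le0.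
      + by [].
      + by move=> ->; rewrite oppr0.
  by rewrite bsum oppr_lt0.
move=> [w [hw hb]].
pose W (i j : 'I_n) := if (i < j)%N then w (i, j) else w (j, i).
have hW : stress_sym W.
  move=> i j; rewrite /W; case: (ltngtP i j) => h //.
  by move: h => /val_inj ->.
have hconv : forall F : 'I_n * 'I_n -> R, (forall e, ~~ cnd e.1 e.2 -> F e = 0) ->
    \sum_e w e * F e = \sum_e W e.1 e.2 * F e.
  move=> F hF; apply: eq_bigr => -[i j] _ /=.
  case h: (cnd i j); last by rewrite hF ?h // !mulr0.
  by rewrite /W; move/andP: h => [-> _].
have hA : forall v e, ~~ cnd e.1 e.2 -> Amat e v = 0 by move=> v e /negbTE h; rewrite /Amat h.
have hB : forall e, ~~ cnd e.1 e.2 -> bvec e = 0 by move=> e /negbTE h; rewrite /bvec h.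
exists W; split => //.
- move=> k; split.
  + move: (hw (inl (inl k))) => /=; rewrite (hconv _ (hA _)) /Amat /= => hh.
    by rewrite -(colgen hW x k).
  + move: (hw (inl (inr k))) => /=; rewrite (hconv _ (hA _)) /Amat /= => hh2.
    by rewrite -(colgen hW y k).
- split; last by move: hb; rewrite (hconv _ hB) bsum oppr_lt0.
  move=> k; move: (hw (inr k)) => /=; rewrite (hconv _ (hA _)) colr //.
  case: (tkind part r' k) => /=.
  + by rewrite oppr_ge0.
  + by rewrite oppr_le0.
  + by [].
  + by move/eqP; rewrite oppr_eq0 => /eqP.
Qed.
End Main.
Theorem mainTheorem10 (R : realType) (n : nat) (adj : rel 'I_n)
    (rot : 'I_n -> seq 'I_n) (x y r : 'I_n -> R) (part : 'I_n -> kind) :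
  symmetric adj -> irreflexive adj -> rotation_system adj rot ->
  is_packing adj rot x y r ->
  (second_order_rigid adj x y r part <->
   forall x' y' r' : 'I_n -> R,
     proper_flex adj x y r part x' y' r' -> ~ trivial_flex x y x' y' r' ->
     exists w : 'I_n -> 'I_n -> R,
       [/\ stress_sym w, equilibrium adj x y w &
           blocks adj x y r part x' y' r' w]).
Proof.
move=> hsym hirr _ _; split.
  move=> hsor x' y' r' hprop hnt.
  have hne := hsor _ _ _ hprop hnt.
  have hne' := fun h => hne ((ext_iff hsym hirr x y r x' y' r' part).2 h).
  have := (farkas_eq _ _ _).1 hne'.
  by move/(cert_iff hsym hirr x y r x' y' r' part).2.
move=> hblk x' y' r' hprop hnt hext.
have hc := (cert_iff hsym hirr x y r x' y' r' part).1 (hblk _ _ _ hprop hnt).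
exact: ((farkas_eq _ _ _).2 hc) ((ext_iff hsym hirr x y r x' y' r' part).1 hext).
Qed.
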